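(* Let $X_1$ be a real random variable with cumulative distribution function $F$ and mean $\mu$, let $p\geq1$ and suppose $\nu_p:=(\mathbb{E}|X_1-\mu|^p)^{1/p}<+\infty$. For $\xi>0$ define \[\rho_{F,p}(\xi):=\sup\left\{\frac{(\mathbb{E}[|X_1-\mu|^pZ])^{1/p}}{\nu_p}:\ Z \text{ a random variable with }0\leq Z\leq1,\ \mathbb{E}Z\leq\xi\right\}\] when $\nu_p>0$, and $\rho_{F,p}(\xi)=0$ otherwise (the supremum is over random variables $Z$ defined jointly with $X_1$). Then $0\leq\rho_{F,p}\leq1$, $\lim_{\xi\to0}\rho_{F,p}(\xi)=0$, and \[\forall r>0:\quad \Pr(|X_1-\mu|>r\nu_p)\leq\frac{\rho_{F,p}(r^{-p})^p}{r^p}.\] Finally, if $\nu_q\leq\kappa_{p,q}\nu_p<+\infty$ for some $q>p$ (with $\nu_q:=(\mathbb{E}|X_1-\mu|^q)^{1/q}$), then $\rho_{F,p}(\xi)\leq\kappa_{p,q}\,\xi^{\frac1p-\frac1q}$. *)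

(* Defs.v *)
From HB Require Import structures.
From mathcomp Require Import all_boot all_order all_algebra.
From mathcomp Require Import all_classical all_reals all_analysis.
Set Implicit Arguments. Unset Strict Implicit. Unset Printing Implicit Defensive.
Import Order.TTheory GRing.Theory Num.Theory.
Local Open Scope classical_set_scope.
Local Open Scope ring_scope.

Section defs.
Context {d : measure_display} {T : measurableType d} {R : realType}.
Variable P : probability T R.

(* mu = E X (real number; meaningful when X is integrable) *)
Definition mean (X : T -> R) : R := fine ('E_P[X])%E.

Definition cmoment (X : T -> R) (p : R) : \bar R :=
  (\int[P]_x (`|X x - mean X| `^ p)%:E)%E.

(* nu_p = (E |X - mu|^p)^(1/p) (meaningful when cmoment X p < +oo) *)
Definition nu (X : T -> R) (p : R) : R := fine (cmoment X p) `^ p^-1.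

Definition rho_set (X : T -> R) (p xi : R) : set R :=
  [set y | exists Z : T -> R,
      [/\ measurable_fun [set: T] Z,
          (forall t, 0 <= Z t <= 1),
          ('E_P[Z] <= xi%:E)%E &
          y = fine (\int[P]_x ((`|X x - mean X| `^ p * Z x)%:E))%E `^ p^-1
              / nu X p]].

Definition rho (X : T -> R) (p xi : R) : R :=
  if 0 < nu X p then sup (rho_set X p xi) else 0.

End defs.

(* Main.v *)
Require Import Defs.
From HB Require Import structures.
From mathcomp Require Import all_boot all_order all_algebra.
From mathcomp Require Import all_classical all_reals all_analysis.
From mathcomp Require Import measurable_realfun.
From mathcomp Require Import ring lra.
Import Order.TTheory GRing.Theory Num.Theory.
Local Open Scope classical_set_scope.
Local Open Scope ring_scope.

Set Implicit Arguments. Unset Strict Implicit.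
Section S.
Context d (T : measurableType d) (R : realType) (P : probability T R)
  (X : T -> R) (p : R).
Hypothesis mX : measurable_fun [set: T] X.
Hypothesis hp : 1 <= p.
Hypothesis hnu : (cmoment P X p < +oo)%E.

Definition W t := `|X t - mean P X| `^ p.

Lemma p0 : 0 < p. Proof. exact: lt_le_trans hp. Qed.
Lemma pinv0 : p^-1 != 0. Proof. by rewrite invr_neq0// gt_eqF// p0. Qed.

Lemma W_ge0 t : 0 <= W t. Proof. exact: powR_ge0. Qed.

Lemma mW : measurable_fun [set: T] W.
Proof.
apply: (measurableT_comp (measurable_powR _)).
apply: measurableT_comp => //; exact: measurable_funB.
Qed.

Definition c := fine (cmoment P X p).

Lemma cmomentE : cmoment P X p = (\int[P]_x (W x)%:E)%E. Proof. by []. Qed.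

Lemma cE : cmoment P X p = c%:E.
Proof.
rewrite /c fineK// ge0_fin_numE// cmomentE integral_ge0// => x _.
by rewrite lee_fin W_ge0.
Qed.

Lemma c_ge0 : 0 <= c.
Proof. by rewrite -lee_fin -cE cmomentE integral_ge0// => x _; rewrite lee_fin W_ge0. Qed.

Lemma nuE : nu P X p = c `^ p^-1. Proof. by []. Qed.

Lemma nu_ge0 : 0 <= nu P X p. Proof. exact: powR_ge0. Qed.

Definition adm (Z : T -> R) := measurable_fun [set: T] Z /\ forall t, 0 <= Z t <= 1.

Definition I Z := (\int[P]_x ((W x * Z x)%:E))%E.

Lemma mWZ Z : adm Z -> measurable_fun [set: T] (fun x => W x * Z x).
Proof. by case=> mZ _; apply: measurable_funM => //; exact: mW. Qed.

Lemma I_ge0 Z : adm Z -> (0 <= I Z)%E.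
Proof.
case=> _ Z01; apply: integral_ge0 => x _; rewrite lee_fin mulr_ge0 ?W_ge0//.
by case/andP: (Z01 x).
Qed.

Lemma I_le Z : adm Z -> (I Z <= c%:E)%E.
Proof.
move=> aZ; rewrite -cE cmomentE; apply: ge0_le_integral => //.
- move=> x _; rewrite lee_fin mulr_ge0 ?W_ge0//; by case/andP: (aZ.2 x).
- by apply/measurable_EFinP; exact: mWZ.
- by apply/measurable_EFinP; exact: mW.
- move=> x _; rewrite lee_fin; case/andP: (aZ.2 x) => _ Z1.
  by rewrite ler_piMr ?W_ge0.
Qed.

Lemma I_fin Z : adm Z -> I Z = (fine (I Z))%:E.
Proof.
move=> aZ; rewrite fineK// ge0_fin_numE ?I_ge0//.
exact: (le_lt_trans (I_le aZ) (ltry c)).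
Qed.

Lemma fI_ge0 Z : adm Z -> 0 <= fine (I Z).
Proof. by move=> aZ; rewrite fine_ge0// I_ge0. Qed.

Lemma fI_le Z : adm Z -> fine (I Z) <= c.
Proof. by move=> aZ; rewrite -lee_fin -I_fin// I_le. Qed.

Lemma rho_setP xi y : rho_set P X p xi y <->
  exists Z, [/\ adm Z, ('E_P[Z] <= xi%:E)%E & y = fine (I Z) `^ p^-1 / nu P X p].
Proof.
split.
- by case=> Z [mZ Z01 EZ ->]; exists Z; split.
- by case=> Z [[mZ Z01] EZ ->]; exists Z; split.
Qed.

Lemma adm0 : adm (cst 0).
Proof. by split => // t; rewrite lexx ler01. Qed.

Lemma rho_set0 xi : 0 <= xi -> rho_set P X p xi 0.
Proof.
move=> xi0; apply/rho_setP; exists (cst 0); split; first exact: adm0.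
  by rewrite expectation_cst lee_fin.
rewrite /I; under eq_integral do rewrite /= mulr0.
by rewrite integral0 /= powR0 ?pinv0// mul0r.
Qed.

Lemma rho_set_le1 xi y : 0 < nu P X p -> rho_set P X p xi y -> y <= 1.
Proof.
move=> nu0 /rho_setP[Z [aZ _ ->]].
rewrite ler_pdivrMr// mul1r nuE ge0_ler_powR// ?invr_ge0 ?(ltW p0)//.
- by rewrite nnegrE fI_ge0.
- by rewrite nnegrE c_ge0.
- exact: fI_le.
Qed.

Lemma rho_set_ge0 xi y : rho_set P X p xi y -> 0 <= y.
Proof.
by move=> /rho_setP[Z [aZ _ ->]]; rewrite divr_ge0 ?powR_ge0 ?nu_ge0.
Qed.

Lemma rho_hasub xi : 0 < nu P X p -> has_ubound (rho_set P X p xi).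
Proof. by move=> nu0; exists 1 => y; exact: rho_set_le1. Qed.

Lemma rho_ge xi y : rho_set P X p xi y -> y <= rho P X p xi.
Proof.
move=> Hy; rewrite /rho; case: ifPn => nu0.
  exact: ub_le_sup (rho_hasub _ nu0) _ Hy.
move: Hy => /rho_setP[Z [aZ _ ->]].
have -> : nu P X p = 0.
  by apply/eqP; rewrite eq_le nu_ge0 andbT leNgt.
by rewrite invr0 mulr0.
Qed.

Lemma rho_le xi b : 0 <= xi -> 0 <= b -> (forall y, rho_set P X p xi y -> y <= b) ->
  rho P X p xi <= b.
Proof.
move=> xi0 b0 H; rewrite /rho; case: ifPn => // nu0.
apply: ge_sup; first by exists 0; exact: rho_set0.
by move=> y; exact: H.
Qed.

Lemma part1 xi : 0 < xi -> 0 <= rho P X p xi <= 1.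
Proof.
move=> xi0; apply/andP; split.
  exact: rho_ge (rho_set0 (ltW xi0)).
apply: rho_le => //; first exact: ltW.
move=> y Hy; rewrite /rho.
have [nu0|nu0] := ltP 0 (nu P X p); first exact: rho_set_le1 Hy.
move: Hy => /rho_setP[Z [aZ _ ->]].
have -> : nu P X p = 0 by apply/eqP; rewrite eq_le nu_ge0 nu0.
by rewrite invr0 mulr0.
Qed.


Lemma EZE Z : ('E_P[Z] = \int[P]_x (Z x)%:E)%E.
Proof. by rewrite unlock. Qed.

Lemma UI e : 0 < e -> exists2 delta, 0 < delta &
  forall Z, adm Z -> ('E_P[Z] <= delta%:E)%E -> (I Z <= e%:E)%E.
Proof.
move=> e0.
pose A (n : nat) := W @^-1` `]n%:R, +oo[.
have mA n : measurable (A n).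
  by rewrite -[A n]setTI; apply: mW => //; exact: measurable_itv.
pose f_ (n : nat) x := ((W x * \1_(A n) x)%:E)%E.
have mf_ n : measurable_fun setT (f_ n).
  apply/measurable_EFinP; apply: measurable_funM; first exact: mW.
  exact: measurable_indic.
have f_f x : setT x -> f_ ^~ x @ \oo --> (cst 0%E) x.
  move=> _; apply: cvg_near_cst; exists (Num.truncn (W x)).+1 => // n /= Hn.
  rewrite /f_ indicE memNset ?mulr0//.
  rewrite /A /preimage /= in_itv /= andbT; apply/negP; rewrite -leNgt.
  apply: (le_trans (ltW (truncnS_gt _))); by rewrite ler_nat.
have fing x : setT x -> ((W x)%:E)%E \is a fin_num by [].
have ig : P.-integrable setT (fun x => (W x)%:E).
  apply/integrableP; split; first exact/measurable_EFinP/mW.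
  under eq_integral => x _ do rewrite gee0_abs ?lee_fin ?W_ge0//.
  by rewrite -cmomentE.
have absfg n x : setT x -> (`|f_ n x| <= (W x)%:E)%E.
  move=> _; rewrite /f_ abse_EFin lee_fin ger0_norm; last first.
    by rewrite mulr_ge0 ?W_ge0// indicE; case: (_ \in _).
  by rewrite ler_piMr ?W_ge0// indicE; case: (_ \in _).
have := @dominated_cvg _ _ _ P setT measurableT f_ (cst 0%E) (fun x => (W x)%:E)
  mf_ f_f fing ig absfg.
rewrite integral0 => /fine_cvgP[finN /cvgrPdist_lt /(_ (e/2))].
rewrite divr_gt0// => /(_ isT) H2.
have [N _ HN] := proj2 (@near_andP _ _ _ _ _) (conj finN H2).
have [finNN HNN] := HN N (leqnn N).
move: HNN; rewrite /= sub0r normrN => HNN.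
have IfN : (\int[P]_x f_ N x <= (e/2)%:E)%E.
  by rewrite -(fineK finNN) lee_fin (le_trans (ler_norm _)) ?ltW.
have N1 : 0 < N%:R + 1 :> R by rewrite ltr_wpDl.
exists (e / (2 * (N%:R + 1))); first by rewrite divr_gt0// mulr_gt0.
move=> Z aZ EZ.
have Z0 x : 0 <= Z x by case/andP: (aZ.2 x).
have mZ := aZ.1.
apply: (@le_trans _ _ (\int[P]_x (((N%:R * Z x)%:E) + f_ N x))%E).
  apply: ge0_le_integral => //.
  - by move=> x _; rewrite lee_fin mulr_ge0 ?W_ge0.
  - by apply/measurable_EFinP; exact: mWZ.
  - apply: emeasurable_funD => //; apply/measurable_EFinP.
    exact: measurable_funM.
  - move=> x _; rewrite /f_ -EFinD lee_fin indicE.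
    case/andP: (aZ.2 x) => _ Z1.
    case: (boolP (x \in A N)) => /= xA.
      rewrite mulr1 (le_trans (ler_piMr (W_ge0 x) Z1))// lerDr mulr_ge0//.
    rewrite mulr0 addr0 ler_wpM2r//.
    rewrite leNgt; apply/negP => hx; apply: (negP xA); apply: mem_set.
    by rewrite /A /preimage /= in_itv /= andbT.
rewrite ge0_integralD//; first last.
- by move=> x _; rewrite lee_fin mulr_ge0// W_ge0.
- apply/measurable_EFinP; exact: measurable_funM.
- by move=> x _; rewrite lee_fin mulr_ge0.
under eq_integral do rewrite EFinM.
rewrite ge0_integralZl//; first last.
- by move=> x _; rewrite lee_fin.
- exact/measurable_EFinP.
rewrite -EZE.
apply: (@le_trans _ _ ((N%:R * (e / (2 * (N%:R + 1))))%:E + (e/2)%:E)%E).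
  apply: leeD => //; rewrite EFinM; apply: lee_wpmul2l => //.
rewrite -EFinD lee_fin.
have -> : N%:R * (e / (2 * (N%:R + 1))) = (e/2) * (N%:R / (N%:R + 1)).
  by field; rewrite gt_eqF.
have : N%:R / (N%:R + 1) <= 1 :> R by rewrite ler_pdivrMr// mul1r lerDl.
move=> h; nra.
Qed.

Lemma part2 : rho P X p xi @[xi --> 0^'+] --> 0.
Proof.
apply/cvgrPdist_le => eps eps0.
have [nu0|nu0] := ltP 0 (nu P X p); last first.
  have nuF : (0 < nu P X p) = false by rewrite ltNge nu0.
  by apply: nearW => xi; rewrite /rho nuF subrr normr0; exact: ltW.

have en0 : 0 < eps * nu P X p by rewrite mulr_gt0.
have [delta delta0 Hd] := UI (powR_gt0 p en0).
near=> xi.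
have xi0 : 0 < xi by near: xi; exact: nbhs_right_gt.
have xid : xi <= delta by near: xi; exact: nbhs_right_le.
rewrite sub0r normrN ger0_norm; last by case/andP: (part1 xi0).
apply: rho_le; [exact: ltW | exact: ltW |].
move=> y /rho_setP[Z [aZ EZ ->]].
rewrite ler_pdivrMr//.
have -> : eps * nu P X p = ((eps * nu P X p) `^ p) `^ p^-1.
  by rewrite -powRrM mulfV ?gt_eqF ?p0// powRr1// ltW.
apply: ge0_ler_powR; first by rewrite invr_ge0 ltW// p0.
- by rewrite nnegrE fI_ge0.
- by rewrite nnegrE powR_ge0.
rewrite -lee_fin -I_fin//; apply: Hd => //.
by rewrite (le_trans EZ)// lee_fin.
Unshelve. all: by end_near.
Qed.

Lemma powRpK a : 0 <= a -> (a `^ p) `^ p^-1 = a.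
Proof. by move=> a0; rewrite -powRrM mulfV ?gt_eqF ?p0// powRr1. Qed.

Lemma powRKp a : 0 <= a -> (a `^ p^-1) `^ p = a.
Proof. by move=> a0; rewrite -powRrM mulVf ?gt_eqF ?p0// powRr1. Qed.

Lemma nu0_c : 0 < nu P X p -> 0 < c.
Proof.
move=> nu0; rewrite lt_neqAle c_ge0 andbT; apply/eqP => c0.
by move: nu0; rewrite nuE -c0 powR0 ?pinv0// ltxx.
Qed.

Lemma part3 r : 0 < r ->
  (P [set t | (r * nu P X p < `|X t - mean P X|)%R ]
          <= (rho P X p (r `^ (- p)) `^ p / r `^ p)%:E)%E.
Proof.
move=> r0.
set A := [set t | _].
have mabs : measurable_fun setT (fun t => `|X t - mean P X|).
  by apply: measurableT_comp => //; exact: measurable_funB.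
have mA : measurable A.
  have -> : A = (fun t => `|X t - mean P X|) @^-1` `]r * nu P X p, +oo[.
    by apply/seteqP; split => t /=; rewrite in_itv /= andbT.
  by rewrite -[X in measurable X]setTI; apply: mabs => //; exact: measurable_itv.
have [nu0|nu0] := ltP 0 (nu P X p); last first.
  have nuE0 : nu P X p = 0 by apply/eqP; rewrite eq_le nu0 nu_ge0.
  have nuF : (0 < nu P X p) = false by rewrite ltNge nu0.
  rewrite /rho nuF powR0 ?gt_eqF ?p0// mul0r.
  have c0 : c = 0 by move: nuE0; rewrite nuE => /powR_eq0_eq0.
  have : (\int[P]_(x in setT) `|(EFin \o W) x| = 0)%E.
    under eq_integral => x _ do rewrite /comp abse_EFin ger0_norm ?W_ge0//.
    by rewrite -cmomentE cE c0.
  move/(ae_eq_integral_abs P measurableT (proj2 (measurable_EFinP _ _) mW)).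
  case=> N [mN N0 sub].
  rewrite (@subset_measure0 _ _ _ P A N mA mN)//.
  move=> t At; apply: sub => /= /(_ Logic.I) /eqP; rewrite eqe.
  rewrite /W powR_eq0 (gt_eqF p0) andbT; apply/negP.
  by rewrite gt_eqF//; move: At; rewrite /A /= nuE0 mulr0.
pose Z := \1_A : T -> R.
have aZ : adm Z.
  split; first exact: measurable_indic.
  by move=> t; rewrite /Z indicE; case: (_ \in _) => /=; rewrite ?lexx ?ler01.
have PAfin : P A \is a fin_num.
  rewrite ge0_fin_numE// (le_lt_trans (probability_le1 _ mA))//.
  by rewrite ltry.
set pA := fine (P A).
have PAE : P A = pA%:E by rewrite fineK.
have pA0 : 0 <= pA by rewrite fine_ge0.
have rnu0 : 0 <= r * nu P X p by rewrite mulr_ge0 ?nu_ge0 ?ltW.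
have h1 : (r * nu P X p) `^ p * pA <= fine (I Z).
  rewrite -lee_fin -I_fin// EFinM -PAE.
  have -> : P A = (\int[P]_(x in setT) (\1_A x)%:E)%E by rewrite integral_indic// setIT.
  rewrite -ge0_integralZl//; first last.
  - by rewrite lee_fin powR_ge0.
  - by apply/measurable_EFinP; exact: measurable_indic.
  apply: ge0_le_integral => //.
  - move=> x _; rewrite -EFinM lee_fin; apply: mulr_ge0; first exact: powR_ge0.
    by rewrite indicE; case: (_ \in _).
  - apply: emeasurable_funM => //; apply/measurable_EFinP.
    exact: measurable_indic.
  - by apply/measurable_EFinP; exact: mWZ.
  - move=> x _; rewrite -EFinM lee_fin /Z indicE.
    case: (boolP (x \in A)) => xA; rewrite ?mulr0 ?mulr1 //.
    apply: ge0_ler_powR; first exact: ltW p0.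
    + by rewrite nnegrE.
    + by rewrite nnegrE.
    by apply: ltW; move: xA; rewrite inE.
have h2 : fine (I Z) <= c by exact: fI_le.
have c0 := nu0_c nu0.
have rp0 : 0 < r `^ p by rewrite powR_gt0.
have h3 : r `^ p * pA <= 1.
  have : (r * nu P X p) `^ p * pA <= c by exact: le_trans h1 h2.
  rewrite (powRM _ (ltW r0) nu_ge0) nuE powRKp ?c_ge0// => h.
  by rewrite -(@ler_pM2r _ c)// mul1r mulrAC.
have EZ : ('E_P[Z] <= (r `^ (- p))%:E)%E.
  rewrite /Z expectation_indic// PAE lee_fin powRN.
  by rewrite -(@ler_pM2l _ (r `^ p))// mulfV ?gt_eqF.
have Hy := rho_ge (proj2 (rho_setP _ _) (ex_intro _ Z (And3 aZ EZ erefl))).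
have h4 : r * pA `^ p^-1 <= fine (I Z) `^ p^-1 / nu P X p.
  rewrite ler_pdivlMr//.
  have -> : r * pA `^ p^-1 * nu P X p = ((r * nu P X p) `^ p * pA) `^ p^-1.
    by rewrite powRM ?powR_ge0// powRpK// mulrAC.
  apply: ge0_ler_powR => //; first by rewrite invr_ge0 ltW// p0.
  - by rewrite nnegrE mulr_ge0// powR_ge0.
  - by rewrite nnegrE fI_ge0.
have h5 : r * pA `^ p^-1 <= rho P X p (r `^ (- p)) := le_trans h4 Hy.
rewrite PAE lee_fin ler_pdivlMr// mulrC.
have -> : r `^ p * pA = (r * pA `^ p^-1) `^ p.
  by rewrite (powRM _ (ltW r0) (powR_ge0 _ _)) powRKp.
apply: ge0_ler_powR => //; first exact: ltW p0.
- by rewrite nnegrE; apply: mulr_ge0; [exact: ltW | exact: powR_ge0].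
- rewrite nnegrE; apply: (le_trans _ h5).
  by apply: mulr_ge0; [exact: ltW | exact: powR_ge0].
Qed.

Lemma part4 q kappa : p < q -> 0 <= kappa ->
  (cmoment P X q < +oo)%E -> nu P X q <= kappa * nu P X p ->
  forall xi : R, 0 < xi -> rho P X p xi <= kappa * xi `^ (p^-1 - q^-1).
Proof.
move=> pq k0 hq hk xi xi0.
have q0 : 0 < q by exact: lt_trans p0 pq.
have qp0 : 0 < q - p by rewrite subr_gt0.
set cq := fine (cmoment P X q).
have Wq t : W t `^ (q / p) = `|X t - mean P X| `^ q.
  by rewrite /W -powRrM mulrCA mulfV ?gt_eqF ?p0// mulr1.
have cqE : cmoment P X q = cq%:E.
  rewrite /cq fineK// ge0_fin_numE//.
  by apply: integral_ge0 => x _; rewrite lee_fin powR_ge0.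
have cq0 : 0 <= cq.
  by rewrite -lee_fin -cqE; apply: integral_ge0 => x _; rewrite lee_fin powR_ge0.
apply: rho_le; [exact: ltW | by rewrite mulr_ge0// powR_ge0 |].
move=> y /rho_setP[Z [aZ EZ ->]].
have [nu0|nu0] := ltP 0 (nu P X p); last first.
  have -> : nu P X p = 0 by apply/eqP; rewrite eq_le nu0 nu_ge0.
  by rewrite invr0 mulr0 mulr_ge0// powR_ge0.
have Z0 x : 0 <= Z x by case/andP: (aZ.2 x).
have Z1 x : Z x <= 1 by case/andP: (aZ.2 x).
pose a := q / p; pose b := q / (q - p).
have a0 : 0 < a by rewrite divr_gt0// p0.
have b0 : 0 < b by rewrite divr_gt0.
have ab : a^-1 + b^-1 = 1.
  rewrite /a /b !invf_div; field; rewrite gt_eqF//.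
have H := @hoelder _ _ _ P W Z a b mW aZ.1 a0 b0 ab.
have N1E : Lnorm P 1 (EFin \o (W \* Z)%R) = I Z.
  rewrite Lnorm1; apply: eq_integral => x _.
  by rewrite /comp abse_EFin ger0_norm// mulr_ge0// W_ge0.
have NaE : Lnorm P a%:E (EFin \o W) = (cq `^ a^-1)%:E.
  rewrite unlock /=.
  under eq_integral => x _ do rewrite ger0_norm ?W_ge0// Wq.
  by rewrite -[X in (X `^ _)%E = _]/(cmoment P X q) cqE poweR_EFin.
have Jle : (\int[P]_x ((Z x) `^ b)%:E <= xi%:E)%E.
  apply: le_trans EZ; rewrite EZE; apply: ge0_le_integral => //.
  - by move=> x _; rewrite lee_fin powR_ge0.
  - apply/measurable_EFinP; apply: (measurableT_comp (measurable_powR _)).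
    exact: aZ.1.
  - exact/measurable_EFinP/(aZ.1).
  - move=> x _; rewrite lee_fin.
    have [->|Zx0] := eqVneq (Z x) 0; first by rewrite powR0 ?gt_eqF.
    apply: ge1r_powR; last by rewrite /b ler_pdivlMr// mul1r gerBl; exact: ltW p0.
    by rewrite lt_neqAle eq_sym Zx0 Z0 Z1.
have Jfin : (\int[P]_x ((Z x) `^ b)%:E)%E \is a fin_num.
  rewrite ge0_fin_numE; last by apply: integral_ge0 => x _; rewrite lee_fin powR_ge0.
  by rewrite (le_lt_trans Jle)// ltry.
have [J JE] : exists J, (\int[P]_x ((Z x) `^ b)%:E)%E = J%:E.
  by exists (fine (\int[P]_x ((Z x) `^ b)%:E)%E); rewrite fineK.
have J0 : 0 <= J.
  by rewrite -lee_fin -JE; apply: integral_ge0 => x _; rewrite lee_fin powR_ge0.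
have NbE : Lnorm P b%:E (EFin \o Z) = (J `^ b^-1)%:E.
  rewrite unlock /=.
  under eq_integral => x _ do rewrite ger0_norm ?Z0//.
  by rewrite JE poweR_EFin.
rewrite N1E NaE NbE -EFinM I_fin// lee_fin in H.
have JX : J `^ b^-1 <= xi `^ b^-1.
  apply: ge0_ler_powR; first by rewrite invr_ge0 ltW.
  - by rewrite nnegrE.
  - by rewrite nnegrE ltW.
  by rewrite -lee_fin -JE.
have H2 : fine (I Z) <= cq `^ a^-1 * xi `^ b^-1.
  apply: (le_trans H); apply: ler_pM; [exact: powR_ge0 | exact: powR_ge0 | exact: lexx | exact: JX].
have nuq : nu P X q = cq `^ q^-1 by rewrite /cq.
rewrite ler_pdivrMr//.
apply: (@le_trans _ _ ((cq `^ a^-1 * xi `^ b^-1) `^ p^-1)).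
  apply: ge0_ler_powR; first by rewrite invr_ge0; exact: ltW p0.
  - by rewrite nnegrE; exact: fI_ge0.
  - by rewrite nnegrE; apply: mulr_ge0; exact: powR_ge0.
  - exact: H2.
rewrite (powRM _ (powR_ge0 _ _) (powR_ge0 _ _)) -!powRrM.
have -> : a^-1 * p^-1 = q^-1.
  by rewrite /a invf_div; field; rewrite (gt_eqF q0) (gt_eqF p0).
have -> : b^-1 * p^-1 = p^-1 - q^-1.
  by rewrite /b invf_div; field; rewrite (gt_eqF q0) (gt_eqF p0).
rewrite -[cq `^ q^-1]/(nu P X q) mulrAC; apply: ler_pM; [exact: powR_ge0 | exact: powR_ge0 | exact: hk | exact: lexx].
Qed.

End S.
Unset Implicit Arguments. Set Strict Implicit.

Theorem proposition2p1 (d : measure_display) (T : measurableType d)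
  (R : realType) (P : probability T R) (X : T -> R) (p : R)
  (mX : measurable_fun [set: T] X)
  (iX : P.-integrable [set: T] (EFin \o X))
  (hp : 1 <= p)
  (hnu : (cmoment P X p < +oo)%E) :
  [/\ (forall xi : R, 0 < xi -> 0 <= rho P X p xi <= 1),
      rho P X p xi @[xi --> 0^'+] --> 0,
      (forall r : R, 0 < r ->
         (P [set t | (r * nu P X p < `|X t - mean P X|)%R ]
          <= (rho P X p (r `^ (- p)) `^ p / r `^ p)%:E)%E) &
      (forall q kappa : R, p < q -> 0 <= kappa ->
         (cmoment P X q < +oo)%E ->
         nu P X q <= kappa * nu P X p ->
         forall xi : R, 0 < xi ->
           rho P X p xi <= kappa * xi `^ (p^-1 - q^-1))].
Proof.
split.
- by move=> xi xi0; apply: part1; assumption.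
- by apply: part2; assumption.
- by move=> r r0; apply: part3; assumption.
- by move=> q kappa pq k0 hq hk xi xi0; apply: part4; assumption.
Qed.
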